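(* For any $i,j\in\{1,\dots,5\}$, if $\mathrm{id}\notin\operatorname{Pol}(R_i,R'_j)$ and $\neg\notin\operatorname{Pol}(R_i,R'_j)$, then $\operatorname{Pol}(R_i,R'_j)$ is exactly the set of constant Boolean functions (of all arities).
   Context: Tuples in $\{0,1\}^4$ are written as strings $abcd$. The relations $R_1,\dots,R_5\subseteq\{0,1\}^4$ are $R_1=\{0000,1000,0100,1100,1010,0110,1001,0101,0011,1011,0111,1111\}$, $R_2=\{0000,1000,0100,1100,1010,0101,0011,1111\}$, $R_3=\{0000,1100,1010,0101,0011,1011,0111,1111\}$, $R_4=\{0000,1100,1010,0101,0011,1111\}$, $R_5=\{0000,1100,1010,0110,1001,0101,0011,1111\}$. For $S\subseteq\{0,1\}^4$, $S':=S\cup\{(a,b,c,d)\in\{0,1\}^4\mid \nexists x\colon (a,b,c,x)\in S\}$. An $n$-ary Boolean function $f$ preserves $(R,S)$ if $f(\mathbf{a}_1,\dots,\mathbf{a}_n)\in S$ (componentwise) for all $\mathbf{a}_1,\dots,\mathbf{a}_n\in R$; $\operatorname{Pol}(R,S)$ is the set of all Boolean functions of all arities preserving $(R,S)$. $\mathrm{id}$ is the unary identity and $\neg x=1-x$. *)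

(* Defs.v *)
From mathcomp Require Import all_boot.
Set Implicit Arguments. Unset Strict Implicit. Unset Printing Implicit Defensive.

(* Elements of {0,1}^4; the string abcd is the function 0|->a,1|->b,2|->c,3|->d. *)
Definition T4 := {ffun 'I_4 -> bool}.

Definition tup (a b c d : bool) : T4 :=
  [ffun i : 'I_4 => nth false [:: a; b; c; d] i].

Definition rel_of (l : seq (seq bool)) : pred T4 :=
  fun t => [seq t i | i <- enum 'I_4] \in l.

Definition R1 : pred T4 := rel_of
  [:: [::false;false;false;false]; [::true;false;false;false];
      [::false;true;false;false];  [::true;true;false;false];
      [::true;false;true;false];   [::false;true;true;false];
      [::true;false;false;true];   [::false;true;false;true];
      [::false;false;true;true];   [::true;false;true;true];
      [::false;true;true;true];    [::true;true;true;true]].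

Definition R2 : pred T4 := rel_of
  [:: [::false;false;false;false]; [::true;false;false;false];
      [::false;true;false;false];  [::true;true;false;false];
      [::true;false;true;false];   [::false;true;false;true];
      [::false;false;true;true];   [::true;true;true;true]].

Definition R3 : pred T4 := rel_of
  [:: [::false;false;false;false]; [::true;true;false;false];
      [::true;false;true;false];   [::false;true;false;true];
      [::false;false;true;true];   [::true;false;true;true];
      [::false;true;true;true];    [::true;true;true;true]].

Definition R4 : pred T4 := rel_of
  [:: [::false;false;false;false]; [::true;true;false;false];
      [::true;false;true;false];   [::false;true;false;true];
      [::false;false;true;true];   [::true;true;true;true]].

Definition R5 : pred T4 := rel_of
  [:: [::false;false;false;false]; [::true;true;false;false];
      [::true;false;true;false];   [::false;true;true;false];
      [::true;false;false;true];   [::false;true;false;true];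
      [::false;false;true;true];   [::true;true;true;true]].

Definition Rel (i : nat) : pred T4 :=
  match i with 1 => R1 | 2 => R2 | 3 => R3 | 4 => R4 | 5 => R5 | _ => pred0 end.

Definition prime_rel (S : pred T4) : pred T4 :=
  fun t => S t || ~~ [exists x : bool, S (tup (t ord0) (t (inord 1)) (t (inord 2)) x)].

Definition boolfun (n : nat) := {ffun 'I_n -> bool} -> bool.

Definition preserves (n : nat) (f : boolfun n) (R S : pred T4) : Prop :=
  forall a : 'I_n -> T4, (forall k, R (a k)) ->
    S [ffun c : 'I_4 => f [ffun k => a k c]].

Definition inPol (R S : pred T4) (n : nat) (f : boolfun n) : Prop := preserves f R S.

Definition id_fun : boolfun 1 := fun x => x ord0.
Definition neg_fun : boolfun 1 := fun x => ~~ x ord0.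

Definition is_constant (n : nat) (f : boolfun n) : Prop :=
  exists b : bool, forall x, f x = b.

(* Main.v *)
Require Import Defs.
From mathcomp Require Import all_boot.
Set Implicit Arguments. Unset Strict Implicit. Unset Printing Implicit Defensive.

Lemma tup_eta (t : T4) :
  t = tup (t ord0) (t (inord 1)) (t (inord 2)) (t (inord 3)).
Proof.
apply/ffunP => k; rewrite ffunE; case: k => [[|[|[|[|k]]]] Hk] //=;
  try (congr (t _); apply: val_inj; rewrite /= ?inordK //).
Qed.

Lemma map_tup a b c d : [seq tup a b c d i | i <- enum 'I_4] = [:: a; b; c; d].
Proof.
apply: (@eq_from_nth _ false); first by rewrite size_map size_enum_ord.
rewrite size_map size_enum_ord => k Hk.
rewrite (nth_map ord0) ?size_enum_ord // ffunE nth_enum_ord //.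
Qed.

Definition L (i : nat) : seq (seq bool) :=
  match i with
  | 1 => [:: [::false;false;false;false]; [::true;false;false;false];
      [::false;true;false;false];  [::true;true;false;false];
      [::true;false;true;false];   [::false;true;true;false];
      [::true;false;false;true];   [::false;true;false;true];
      [::false;false;true;true];   [::true;false;true;true];
      [::false;true;true;true];    [::true;true;true;true]]
  | 2 => [:: [::false;false;false;false]; [::true;false;false;false];
      [::false;true;false;false];  [::true;true;false;false];
      [::true;false;true;false];   [::false;true;false;true];
      [::false;false;true;true];   [::true;true;true;true]]
  | 3 => [:: [::false;false;false;false]; [::true;true;false;false];
      [::true;false;true;false];   [::false;true;false;true];
      [::false;false;true;true];   [::true;false;true;true];
      [::false;true;true;true];    [::true;true;true;true]]
  | 4 => [:: [::false;false;false;false]; [::true;true;false;false];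
      [::true;false;true;false];   [::false;true;false;true];
      [::false;false;true;true];   [::true;true;true;true]]
  | 5 => [:: [::false;false;false;false]; [::true;true;false;false];
      [::true;false;true;false];   [::false;true;true;false];
      [::true;false;false;true];   [::false;true;false;true];
      [::false;false;true;true];   [::true;true;true;true]]
  | _ => [::]
  end.

Definition Rb i a b c d := [:: a; b; c; d] \in L i.
Definition Sb j a b c d := Rb j a b c d || ~~ (Rb j a b c false || Rb j a b c true).

Lemma Rel_tup i a b c d : 1 <= i <= 5 -> Rel i (tup a b c d) = Rb i a b c d.
Proof.
by move: i => [|[|[|[|[|[|i]]]]]] //= _; rewrite /R1 /R2 /R3 /R4 /R5 /rel_of map_tup.
Qed.

Lemma prime_tup j a b c d : 1 <= j <= 5 ->
  prime_rel (Rel j) (tup a b c d) = Sb j a b c d.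
Proof.
move=> Hj; rewrite /prime_rel /Sb Rel_tup //.
have -> : tup a b c d (inord 1) = b by rewrite ffunE /= inordK.
have -> : tup a b c d (inord 2) = c by rewrite ffunE /= inordK.
rewrite ffunE /=; congr (_ || ~~ _).
apply/existsP/orP.
  by case=> [[]]; rewrite Rel_tup // => H; [right|left].
by case=> H; [exists false|exists true]; rewrite Rel_tup.
Qed.

Lemma tup_const b (c : 'I_4) : tup b b b b c = b.
Proof. by rewrite ffunE; case: c => [[|[|[|[|c]]]] Hc]. Qed.

Definition bs := [:: false; true].
Definition all4 (P : bool -> bool -> bool -> bool -> bool) :=
  all (fun a => all (fun b => all (fun c => all (fun d => P a b c d) bs) bs) bs) bs.
Definition has4 (P : bool -> bool -> bool -> bool -> bool) :=
  has (fun a => has (fun b => has (fun c => has (fun d => P a b c d) bs) bs) bs) bs.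

Lemma mem_bs x : x \in bs. Proof. by case: x. Qed.

Lemma all4P P : all4 P -> forall a b c d, P a b c d.
Proof.
move=> H a b c d.
move/allP: H => /(_ a (mem_bs a)) /allP /(_ b (mem_bs b)) /allP /(_ c (mem_bs c))
  /allP /(_ d (mem_bs d)) //.
Qed.

Lemma has4P P : has4 P -> exists a b c d, P a b c d.
Proof.
case/hasP=> a _ /hasP [b _ /hasP [c _ /hasP [d _ H]]].
by exists a, b, c, d.
Qed.

Definition ob (p q r s x y : bool) :=
  if x then (if y then q else s) else (if y then r else p).

Definition out (p q r s : bool) (u v : T4) : T4 :=
  [ffun c => ob p q r s (u c) (v c)].

Lemma out_tup p q r s u1 u2 u3 u4 v1 v2 v3 v4 :
  out p q r s (tup u1 u2 u3 u4) (tup v1 v2 v3 v4) =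
  tup (ob p q r s u1 v1) (ob p q r s u2 v2) (ob p q r s u3 v3) (ob p q r s u4 v4).
Proof.
apply/ffunP => k; rewrite !ffunE; case: k => [[|[|[|[|k]]]] Hk] //=.
Qed.

Definition checkb i j :=
  all (fun p => all (fun q => all (fun r =>
    has4 (fun u1 u2 u3 u4 => has4 (fun v1 v2 v3 v4 =>
      Rb i u1 u2 u3 u4 && Rb i v1 v2 v3 v4 &&
      ~~ Sb j (ob p q r (~~ r) u1 v1) (ob p q r (~~ r) u2 v2)
              (ob p q r (~~ r) u3 v3) (ob p q r (~~ r) u4 v4)))) bs) bs) bs.

Definition good (i j : nat) : bool :=
  all4 (fun a b c d => Rb i a b c d ==> Sb j a b c d)
  || all4 (fun a b c d => Rb i a b c d ==> Sb j (~~a) (~~b) (~~c) (~~d))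
  || (Rb i false false false false && Rb i true true true true && checkb i j).

Lemma good_all i j : 1 <= i <= 5 -> 1 <= j <= 5 -> good i j.
Proof.
move: i j => [|[|[|[|[|[|i]]]]]] [|[|[|[|[|[|j]]]]]] //= _ _; vm_compute; reflexivity.
Qed.

Lemma const_ok j b : 1 <= j <= 5 -> prime_rel (Rel j) [ffun _ => b].
Proof.
move=> Hj; have -> : [ffun _ : 'I_4 => b] = tup b b b b.
  by apply/ffunP => k; rewrite !ffunE; case: k => [[|[|[|[|k]]]] Hk].
rewrite prime_tup //.
by move: j Hj b => [|[|[|[|[|[|j]]]]]] //= _ []; vm_compute.
Qed.

Theorem mainTheorem5 (i j : nat) :
  1 <= i <= 5 -> 1 <= j <= 5 ->
  ~ inPol (Rel i) (prime_rel (Rel j)) id_fun ->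
  ~ inPol (Rel i) (prime_rel (Rel j)) neg_fun ->
  forall (n : nat) (f : boolfun n),
    inPol (Rel i) (prime_rel (Rel j)) f <-> is_constant f.
Proof.
move=> Hi Hj Hid Hneg n f; split; last first.
  case=> b Hb a _; have -> : [ffun c => f [ffun k => a k c]] = [ffun _ => b].
    by apply/ffunP => c; rewrite !ffunE Hb.
  exact: const_ok.
move=> Hf.
have := good_all Hi Hj; rewrite /good.
case/orP=> [/orP [/all4P H|/all4P H]|/andP [/andP [H0 H1] Hc]].
- exfalso; apply: Hid => a Ha.
  have -> : [ffun c => id_fun [ffun k => a k c]] = a ord0.
    by apply/ffunP => c; rewrite !ffunE /id_fun ffunE.
  set t := a ord0; move: (Ha ord0); rewrite -/t (tup_eta t) Rel_tup // prime_tup // => Ha0.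
  by move: (H (t ord0) (t (inord 1)) (t (inord 2)) (t (inord 3))); rewrite Ha0 /=.
- exfalso; apply: Hneg => a Ha.
  have -> : [ffun c => neg_fun [ffun k => a k c]] =
    tup (~~ a ord0 ord0) (~~ a ord0 (inord 1)) (~~ a ord0 (inord 2)) (~~ a ord0 (inord 3)).
    apply/ffunP => c; rewrite !ffunE /neg_fun ffunE.
    by rewrite {1}(tup_eta (a ord0)) ffunE; case: c => [[|[|[|[|k]]]] Hk].
  have Ha0 := Ha ord0; rewrite [a ord0](tup_eta (a ord0)) Rel_tup // in Ha0.
  rewrite prime_tup //.
  by move: (H (a ord0 ord0) (a ord0 (inord 1)) (a ord0 (inord 2)) (a ord0 (inord 3))); rewrite Ha0 /=.
have [x0 _] : exists x0 : {ffun 'I_n -> bool}, True by exists [ffun _ => false].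
case: (boolP [forall x, f x == f x0]) => [/forallP Hall|/forallP Hn].
  by exists (f x0) => x; apply/eqP.
exfalso.
have [x Hx] : exists x, f x != f x0.
  case: (pickP (fun x => f x != f x0)) => [x Hx|H]; first by exists x.
  by exfalso; apply: Hn => y; apply/negbFE; exact: H.
have key : forall u v, Rel i u -> Rel i v ->
   prime_rel (Rel j) (out (f [ffun k => x k && x0 k]) (f [ffun k => x k || x0 k])
                           (f x) (f x0) v u).
  move=> u v Hu Hv.
  pose a := fun k => if x k then (if x0 k then tup true true true true else u)
                     else (if x0 k then v else tup false false false false).
  have Ha : forall k, Rel i (a k).
    by move=> k; rewrite /a; case: (x k); case: (x0 k); rewrite ?Rel_tup.
  have := Hf a Ha.
  have -> : [ffun c => f [ffun k => a k c]] =
     out (f [ffun k => x k && x0 k]) (f [ffun k => x k || x0 k]) (f x) (f x0) v u;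
    last by [].
  apply/ffunP => c; rewrite !ffunE /ob.
  case Evc: (v c); case Euc: (u c); congr (f _); apply/ffunP => k; rewrite !ffunE /a;
    by case: (x k); case: (x0 k); rewrite ?tup_const ?Evc ?Euc.
have Hr : f x0 = ~~ f x by move: Hx; case: (f x); case: (f x0).
move: Hc; rewrite /checkb.
set p := f [ffun k => x k && x0 k]; set q := f [ffun k => x k || x0 k].
set r := f x.
have Hp : p \in bs by case: (p).
have Hq : q \in bs by case: (q).
have Hr' : r \in bs by case: (r).
move/allP/(_ p Hp)/allP/(_ q Hq)/allP/(_ r Hr').
case/has4P=> v1 [v2 [v3 [v4 /has4P [u1 [u2 [u3 [u4 /andP [/andP [Hv Hu] HS]]]]]]]].
move: (key (tup u1 u2 u3 u4) (tup v1 v2 v3 v4)).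
rewrite !Rel_tup // => /(_ Hu Hv).
by rewrite Hr out_tup prime_tup // (negbTE HS).
Qed.
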